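(* Let $(I_t)_{t\ge0}$ be a nested interval-partition with comb metric $d_I$. There exist a countable set $F$ disjoint from $[0,1]$ and a pseudo-ultrametric $\bar d_I$ on $[0,1]\cup F$ extending $d_I$ such that the backbone associated with $([0,1]\cup F,\bar d_I)$, endowed with the Lebesgue measure on $\mathscr I$ extended by zero mass on $F$, is a complete metric space.
   Context: A nested interval-partition is a càdlàg (for the Hausdorff distance between complements) map $t\mapsto I_t$, $t\ge0$, into open subsets of $(0,1)$ with $I_s\subseteq I_t$ for $s\le t$. $f_I(x)=\inf\{t\ge0:x\in I_t\}$ and $d_I(x,y)=\mathbf 1_{\{x\ne y\}}\sup_{[x\wedge y,x\vee y]}f_I$. With $(I^0_i)$ the interval components of $I_0$, $\mathscr I=\{A\cup\bigcup_{i\in M}I^0_i:A\in\mathscr B([0,1]\setminus I_0),M\subseteq\mathbb N\}$. Backbone of a space $(U,d)$ with probability measure $\mu$ (defined on a $\sigma$-field containing the open balls $B(x,t)=\{y:d(x,y)<t\}$): on $U\times\mathbb R_+$ let $d_T((x,s),(y,t))=\max(d(x,y)-\frac{s+t}2,\frac{|t-s|}2)$, $T$ the quotient by $d_T=0$, $f(x)=\inf\{t\ge0:\mu(B(x,t))>0\}$, and the backbone is $\mathcal S=\{(x,t)\in T:t\ge f(x)\}$ with the restriction of $d_T$. *)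

(* Defs.v *)
From Stdlib Require Import Reals Lra ClassicalEpsilon.
Open Scope R_scope.

Inductive ereal : Type := Fin (x : R) | PInf.

Definition ele (a b : ereal) : Prop :=
  match a, b with
  | _, PInf => True
  | PInf, Fin _ => False
  | Fin x, Fin y => x <= y
  end.

Definition elt (a b : ereal) : Prop :=
  match a, b with
  | Fin x, Fin y => x < y
  | Fin _, PInf => True
  | PInf, _ => False
  end.

Definition emax (a b : ereal) : ereal :=
  match a, b with
  | Fin x, Fin y => Fin (Rmax x y)
  | _, _ => PInf
  end.

Definition esubr (a : ereal) (c : R) : ereal :=
  match a with Fin x => Fin (x - c) | PInf => PInf end.

(** infimum in [R ∪ {+∞}] of a set of reals bounded below (inf ∅ = +∞) *)
Definition is_einf (P : R -> Prop) (m : ereal) : Prop :=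
  (forall t, P t -> ele m (Fin t)) /\
  (forall u, (forall t, P t -> ele u (Fin t)) -> ele u m).
Definition einf (P : R -> Prop) : ereal :=
  epsilon (inhabits PInf) (is_einf P).

Definition is_esup (P : ereal -> Prop) (s : ereal) : Prop :=
  (forall v, P v -> ele v s) /\
  (forall u, (forall v, P v -> ele v u) -> ele s u).
Definition esup (P : ereal -> Prop) : ereal :=
  epsilon (inhabits PInf) (is_esup P).

Definition open_set (O : R -> Prop) : Prop :=
  forall x, O x -> exists eps, 0 < eps /\ forall y, Rabs (y - x) < eps -> O y.

Definition closed_set (C : R -> Prop) : Prop := open_set (fun x => ~ C x).

Definition compl01 (O : R -> Prop) : R -> Prop := fun x => 0 <= x <= 1 /\ ~ O x.

Definition hausdorff_le (A B : R -> Prop) (eps : R) : Prop :=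
  (forall a, A a -> exists b, B b /\ Rabs (a - b) <= eps) /\
  (forall b, B b -> exists a, A a /\ Rabs (a - b) <= eps).

Definition nested_interval_partition (I : R -> R -> Prop) : Prop :=
  (forall t, 0 <= t -> open_set (I t) /\ forall x, I t x -> 0 < x < 1) /\
  (forall s t, 0 <= s -> s <= t -> forall x, I s x -> I t x) /\
  (forall t, 0 <= t -> forall eps, 0 < eps -> exists delta, 0 < delta /\
     forall s, t <= s < t + delta ->
       hausdorff_le (compl01 (I s)) (compl01 (I t)) eps) /\
  (* left limits exist (in the space of nonempty compact subsets of [0,1]) *)
  (forall t, 0 < t -> exists L : R -> Prop,
     closed_set L /\ (exists z, L z) /\ (forall z, L z -> 0 <= z <= 1) /\
     forall eps, 0 < eps -> exists delta, 0 < delta /\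
       forall s, 0 <= s -> t - delta < s < t ->
         hausdorff_le (compl01 (I s)) L eps).

Definition fI (I : R -> R -> Prop) (x : R) : ereal :=
  einf (fun t => 0 <= t /\ I t x).

Definition dI (I : R -> R -> Prop) (x y : R) : ereal :=
  if Req_EM_T x y then Fin 0
  else esup (fun v => exists z, Rmin x y <= z <= Rmax x y /\ v = fI I z).

Inductive borel : (R -> Prop) -> Prop :=
| borel_interval a b : borel (fun x => a < x < b)
| borel_compl A : borel A -> borel (fun x => ~ A x)
| borel_union (A : nat -> R -> Prop) :
    (forall n, borel (A n)) -> borel (fun x => exists n, A n x)
| borel_ext A B : (forall x, A x <-> B x) -> borel A -> borel B.

Definition is_component (O : R -> Prop) (a b : R) : Prop :=
  a < b /\ (forall x, a < x < b -> O x) /\ ~ O a /\ ~ O b.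

Definition in_scrI (I : R -> R -> Prop) (S : R -> Prop) : Prop :=
  exists (A : R -> Prop) (M : R -> R -> Prop),
    borel A /\ (forall x, A x -> 0 <= x <= 1 /\ ~ I 0 x) /\
    (forall a b, M a b -> is_component (I 0) a b) /\
    forall x, S x <-> (A x \/ exists a b, M a b /\ a < x < b).

(** * Lebesgue null sets (a set has positive Lebesgue measure iff it is not null) *)
Definition lebesgue_null (A : R -> Prop) : Prop :=
  forall eps, 0 < eps -> exists a b : nat -> R,
    (forall n, a n <= b n) /\
    (forall x, A x -> exists n, a n < x < b n) /\
    (forall N, sum_f_R0 (fun n => b n - a n) N <= eps).

Definition unit01 : Type := {x : R | 0 <= x <= 1}.
Definition U (F : Type) : Type := (unit01 + F)%type.

Definition pseudo_ultrametric {X : Type} (d : X -> X -> ereal) : Prop :=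
  (forall x, d x x = Fin 0) /\
  (forall x y, d x y = d y x) /\
  (forall x y, ele (Fin 0) (d x y)) /\
  (forall x y z, ele (d x z) (emax (d x y) (d y z))).

Definition ball {X : Type} (d : X -> X -> ereal) (x : X) (t : R) : X -> Prop :=
  fun y => elt (d x y) (Fin t).

Definition trace01 {F : Type} (S : U F -> Prop) : R -> Prop :=
  fun r => exists h : 0 <= r <= 1, S (inl (exist _ r h)).

(** μ(S) > 0 for μ = Lebesgue measure on [0,1] extended by zero mass on F *)
Definition mu_pos {F : Type} (S : U F -> Prop) : Prop :=
  ~ lebesgue_null (trace01 S).

Definition dT {X : Type} (d : X -> X -> ereal) (p q : X * R) : ereal :=
  emax (esubr (d (fst p) (fst q)) ((snd p + snd q) / 2))
       (Fin (Rabs (snd q - snd p) / 2)).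

Definition fbb {F : Type} (d : U F -> U F -> ereal) (x : U F) : ereal :=
  einf (fun t => 0 <= t /\ mu_pos (ball d x t)).

Definition in_backbone {F : Type} (d : U F -> U F -> ereal) (p : U F * R) : Prop :=
  0 <= snd p /\ ele (fbb d (fst p)) (Fin (snd p)).

(** completeness of (𝒮, d_T); the quotient by d_T = 0 is complete iff the
    pseudometric space of representatives is complete *)
Definition backbone_complete {F : Type} (d : U F -> U F -> ereal) : Prop :=
  forall p : nat -> U F * R,
    (forall n, in_backbone d (p n)) ->
    (forall eps, 0 < eps -> exists N, forall m n, (N <= m)%nat -> (N <= n)%nat ->
       elt (dT d (p m) (p n)) (Fin eps)) ->
    exists q, in_backbone d q /\
      forall eps, 0 < eps -> exists N, forall n, (N <= n)%nat ->
        elt (dT d (p n) q) (Fin eps).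

(* Main.v *)
Require Import Defs.
From Stdlib Require Import Reals.
Open Scope R_scope.
From Stdlib Require Import ZArith Lra Lia ClassicalEpsilon Classical FunctionalExtensionality PropExtensionality ProofIrrelevance.

Lemma ele_refl a : ele a a.
Proof. destruct a; simpl; auto; lra. Qed.
Lemma ele_trans a b c : ele a b -> ele b c -> ele a c.
Proof. destruct a, b, c; simpl; auto; try lra; tauto. Qed.
Lemma elt_ele a b : elt a b -> ele a b.
Proof. destruct a, b; simpl; auto; lra. Qed.
Lemma ele_elt_trans a b c : ele a b -> elt b c -> elt a c.
Proof. destruct a, b, c; simpl; auto; try lra; tauto. Qed.
Lemma elt_ele_trans a b c : elt a b -> ele b c -> elt a c.
Proof. destruct a, b, c; simpl; auto; try lra; tauto. Qed.
Lemma not_elt a b : ~ elt a b -> ele b a.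
Proof. destruct a, b; simpl; auto; try lra; tauto. Qed.
Lemma not_ele a b : ~ ele a b -> elt b a.
Proof. destruct a, b; simpl; auto; try lra; tauto. Qed.
Lemma emax_l a b : ele a (emax a b).
Proof. destruct a, b; simpl; auto; try apply Rmax_l; lra. Qed.
Lemma emax_r a b : ele b (emax a b).
Proof. destruct a, b; simpl; auto; try apply Rmax_r; lra. Qed.
Lemma emax_lub a b c : ele a c -> ele b c -> ele (emax a b) c.
Proof. destruct a, b, c; simpl; auto; intros; try apply Rmax_lub; auto. Qed.
Lemma emax_lt a b c : elt a c -> elt b c -> elt (emax a b) c.
Proof. destruct a, b, c; simpl; auto; intros; try apply Rmax_lub_lt; auto. Qed.

Lemma esup_exists (P : ereal -> Prop) : (exists v, P v) -> exists s, is_esup P s.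
Proof.
  intros [v0 Hv0].
  destruct (classic (exists M, forall v, P v -> ele v (Fin M))) as [[M HM]|HnM].
  - set (E := fun x => P (Fin x)).
    assert (Hb : bound E). { exists M. intros x Hx. exact (HM _ Hx). }
    assert (Hne : exists x, E x).
    { destruct v0 as [x|]. exists x; exact Hv0. specialize (HM _ Hv0); simpl in HM; tauto. }
    destruct (completeness E Hb Hne) as [m [Hm1 Hm2]].
    exists (Fin m). split.
    + intros [x|] Hx; simpl. apply Hm1; exact Hx. specialize (HM _ Hx); simpl in HM; tauto.
    + intros [b|] Hu; simpl; auto. apply Hm2. intros x Hx. exact (Hu _ Hx).
  - exists PInf. split.
    + intros v _; destruct v; simpl; auto.
    + intros [b|] Hu; simpl; auto. apply HnM. exists b; exact Hu.
Qed.

Lemma esup_spec (P : ereal -> Prop) : (exists v, P v) -> is_esup P (esup P).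
Proof. intros H. unfold esup. apply epsilon_spec. apply esup_exists; auto. Qed.

Lemma esup_ub (P : ereal -> Prop) v : P v -> ele v (esup P).
Proof. intros H. destruct (esup_spec P (ex_intro _ v H)) as [H1 _]. auto. Qed.

Lemma esup_le (P : ereal -> Prop) u : (exists v, P v) -> (forall v, P v -> ele v u) -> ele (esup P) u.
Proof. intros H Hu. destruct (esup_spec P H) as [_ H2]. auto. Qed.

Lemma einf_exists (P : R -> Prop) : (forall t, P t -> 0 <= t) -> exists m, is_einf P m.
Proof.
  intros HP.
  destruct (classic (exists t, P t)) as [[t0 Ht0]|Hne].
  - set (E := fun x => P (- x)).
    assert (Hb : bound E). { exists 0. intros x Hx. specialize (HP _ Hx). lra. }
    assert (Hne : exists x, E x). { exists (- t0). unfold E. rewrite Ropp_involutive. auto. }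
    destruct (completeness E Hb Hne) as [m [Hm1 Hm2]].
    exists (Fin (- m)). split.
    + intros t Ht; simpl. assert (E (- t)). { unfold E. rewrite Ropp_involutive; auto. }
      specialize (Hm1 _ H). lra.
    + intros [b|] Hu; simpl.
      * assert (m <= - b). { apply Hm2. intros x Hx. specialize (Hu _ Hx). simpl in Hu. lra. } lra.
      * specialize (Hu _ Ht0). simpl in Hu. auto.
  - exists PInf. split.
    + intros t Ht. exfalso; apply Hne; eauto.
    + intros u _. destruct u; simpl; auto.
Qed.

Lemma einf_spec (P : R -> Prop) : (forall t, P t -> 0 <= t) -> is_einf P (einf P).
Proof. intros H. unfold einf. apply epsilon_spec. apply einf_exists; auto. Qed.

Lemma einf_nonneg (P : R -> Prop) : (forall t, P t -> 0 <= t) -> ele (Fin 0) (einf P).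
Proof. intros H. destruct (einf_spec P H) as [_ H2]. apply H2. intros t Ht. simpl. auto. Qed.

Lemma einf_lb (P : R -> Prop) t : (forall t, P t -> 0 <= t) -> P t -> ele (einf P) (Fin t).
Proof. intros H Ht. destruct (einf_spec P H) as [H1 _]. auto. Qed.

Lemma einf_lt (P : R -> Prop) t : (forall t, P t -> 0 <= t) -> elt (einf P) (Fin t) ->
  exists t', P t' /\ t' < t.
Proof.
  intros H Hlt. apply NNPP. intros Hn.
  destruct (einf_spec P H) as [_ H2].
  assert (ele (Fin t) (einf P)).
  { apply H2. intros t' Ht'. simpl. apply Rnot_lt_le. intros Hc. apply Hn. eauto. }
  pose proof (ele_elt_trans _ _ _ H0 Hlt). simpl in H1. lra.
Qed.

Lemma einf_le_of (P : R -> Prop) s : (forall t, P t -> 0 <= t) -> (forall t, s < t -> P t) ->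
  ele (einf P) (Fin s).
Proof.
  intros H Hs. destruct (einf_spec P H) as [H1 _].
  pose proof (H1 _ (Hs (s+1) ltac:(lra))) as Hf.
  destruct (einf P) as [m|]; simpl in *; [|tauto].
  apply Rnot_lt_le. intros Hc.
  assert (Hq : s < (m+s)/2) by lra.
  specialize (H1 ((m + s)/2) (Hs _ Hq)). simpl in H1. lra.
Qed.

Lemma fI_nonneg I x : ele (Fin 0) (fI I x).
Proof. apply einf_nonneg. intros t [Ht _]; auto. Qed.

Lemma fI_zero I x : I 0 x -> ele (fI I x) (Fin 0).
Proof. intros H. apply einf_lb. intros t [Ht _]; auto. split; auto; lra. Qed.
Definition key := (R * R)%type.
Definition kle (p q : key) : Prop := fst p < fst q \/ (fst p = fst q /\ snd p <= snd q).
Definition valid (p : key) : Prop := snd p = -1 \/ snd p = 0 \/ snd p = 1.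
Definition Sset (p q : key) (r : R) : Prop :=
  (kle p (r,0) /\ kle (r,0) q) \/ (kle q (r,0) /\ kle (r,0) p).
Definition kdec (p q : key) : {p = q} + {p <> q} := excluded_middle_informative _.
Definition dk (I : R -> R -> Prop) (p q : key) : ereal :=
  if kdec p q then Fin 0 else esup (fun v => exists r, Sset p q r /\ v = fI I r).

Lemma kle_refl p : kle p p.
Proof. right; split; lra. Qed.
Lemma kle_trans p q r : kle p q -> kle q r -> kle p r.
Proof. unfold kle; intros; lra. Qed.
Lemma kle_total p q : kle p q \/ kle q p.
Proof. unfold kle. destruct (Rtotal_order (fst p) (fst q)) as [H|[H|H]]; try lra.
Qed.
Lemma kle_antisym p q : kle p q -> kle q p -> p = q.
Proof. destruct p as [a i], q as [b j]; unfold kle; simpl; intros H1 H2.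
  assert (a = b) by lra. assert (i = j) by lra. subst; auto. Qed.
Lemma not_kle p q : ~ kle p q -> kle q p /\ q <> p.
Proof. intros H. destruct (kle_total p q); [tauto|]. split; auto. intros ->. apply H, kle_refl. Qed.

Lemma S_nonempty p q : valid p -> valid q -> p <> q -> exists r, Sset p q r.
Proof.
  intros Hp Hq Hne.
  assert (Hg : forall p q, valid p -> valid q -> p <> q -> kle p q -> exists r, kle p (r,0) /\ kle (r,0) q).
  { clear. intros [a i] [b j] Hp Hq Hne H. unfold valid, kle in *; simpl in *.
    destruct H as [H|[H1 H2]].
    - exists ((a+b)/2). simpl. lra.
    - subst b. assert (i <> j) by (intro; subst; auto).
      exists a; simpl. lra. }
  destruct (kle_total p q) as [H|H].
  - destruct (Hg p q Hp Hq Hne H) as [r Hr]. exists r. left; auto.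
  - destruct (Hg q p Hq Hp (fun e => Hne (eq_sym e)) H) as [r Hr]. exists r. right; auto.
Qed.

Lemma S_sym p q r : Sset p q r <-> Sset q p r.
Proof. unfold Sset; tauto. Qed.

Lemma S_split p q r x : Sset p r x -> Sset p q x \/ Sset q r x.
Proof.
  unfold Sset. intros [[H1 H2]|[H1 H2]]; destruct (kle_total q (x,0)); tauto.
Qed.

Lemma S_mono p q r x : kle p q -> kle q r -> Sset p q x -> Sset p r x.
Proof.
  unfold Sset. intros H1 H2 [[H3 H4]|[H3 H4]].
  - left; split; eauto using kle_trans.
  - assert (p = q) by (apply kle_antisym; eauto using kle_trans).
    subst. assert ((x,0) = q) by (apply kle_antisym; auto). subst.
    left; split; auto; apply kle_refl.
Qed.

Lemma S_mono2 p q r x : kle p q -> kle q r -> Sset q r x -> Sset p r x.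
Proof.
  unfold Sset. intros H1 H2 [[H3 H4]|[H3 H4]].
  - left; split; eauto using kle_trans.
  - assert (q = r) by (apply kle_antisym; eauto using kle_trans).
    subst. assert ((x,0) = r) by (apply kle_antisym; auto). subst.
    left; split; auto; apply kle_refl.
Qed.

Section DK.
Variable I : R -> R -> Prop.

Lemma dk_self p : dk I p p = Fin 0.
Proof. unfold dk. destruct (kdec p p); congruence. Qed.

Lemma dk_sym p q : dk I p q = dk I q p.
Proof.
  unfold dk. destruct (kdec p q), (kdec q p); subst; auto; try congruence.
  f_equal. apply functional_extensionality; intro v. apply propositional_extensionality.
  split; intros [r [Hr ->]]; exists r; split; auto; apply S_sym; auto.
Qed.

Lemma dk_ub p q r : p <> q -> Sset p q r -> ele (fI I r) (dk I p q).
Proof.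
  intros Hne Hs. unfold dk. destruct (kdec p q); [congruence|].
  apply esup_ub. eauto.
Qed.

Lemma dk_le p q u : valid p -> valid q -> ele (Fin 0) u ->
  (forall r, Sset p q r -> ele (fI I r) u) -> ele (dk I p q) u.
Proof.
  intros Hp Hq H0 H. unfold dk. destruct (kdec p q); auto.
  apply esup_le.
  - destruct (S_nonempty p q Hp Hq n) as [r Hr]. eauto.
  - intros v [r [Hr ->]]. auto.
Qed.

Lemma dk_nonneg p q : valid p -> valid q -> ele (Fin 0) (dk I p q).
Proof.
  intros Hp Hq. unfold dk. destruct (kdec p q). simpl; lra.
  destruct (S_nonempty p q Hp Hq n) as [r Hr].
  eapply ele_trans; [apply (fI_nonneg I r)|]. apply esup_ub. eauto.
Qed.

Lemma dk_ultra p q r : valid p -> valid q -> valid r ->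
  ele (dk I p r) (emax (dk I p q) (dk I q r)).
Proof.
  intros Hp Hq Hr.
  destruct (kdec p q) as [->|Hpq]; [apply emax_r|].
  destruct (kdec q r) as [->|Hqr]; [apply emax_l|].
  apply dk_le; auto.
  - eapply ele_trans; [apply (dk_nonneg p q); auto|apply emax_l].
  - intros x Hx. destruct (S_split p q r x Hx) as [H|H].
    + eapply ele_trans; [apply (dk_ub p q); eauto|apply emax_l].
    + eapply ele_trans; [apply (dk_ub q r); eauto|apply emax_r].
Qed.

Lemma dk_mono p q r : valid p -> valid q -> valid r -> kle p q -> kle q r ->
  ele (dk I p q) (dk I p r).
Proof.
  intros Hp Hq Hr H1 H2.
  destruct (kdec p q) as [->|Hpq]. rewrite dk_self. apply dk_nonneg; auto.
  destruct (kdec p r) as [->|Hpr].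
  { exfalso. apply Hpq. apply kle_antisym; auto. }
  apply dk_le; auto. apply dk_nonneg; auto.
  intros x Hx. apply dk_ub; auto. eapply S_mono; eauto.
Qed.

Lemma dk_mono2 p q r : valid p -> valid q -> valid r -> kle p q -> kle q r ->
  ele (dk I q r) (dk I p r).
Proof.
  intros Hp Hq Hr H1 H2.
  destruct (kdec q r) as [->|Hqr]. rewrite dk_self. apply dk_nonneg; auto.
  destruct (kdec p r) as [->|Hpr].
  { exfalso. apply Hqr. apply kle_antisym; auto. }
  apply dk_le; auto. apply dk_nonneg; auto.
  intros x Hx. apply dk_ub; auto. eapply S_mono2; eauto.
Qed.

Lemma dk_lt_ultra p q r t : valid p -> valid q -> valid r ->
  elt (dk I p q) (Fin t) -> elt (dk I q r) (Fin t) -> elt (dk I p r) (Fin t).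
Proof.
  intros. eapply ele_elt_trans; [apply (dk_ultra p q r); auto|]. apply emax_lt; auto.
Qed.

Lemma dk_convex c p q r t : valid c -> valid p -> valid q -> valid r ->
  kle p q -> kle q r -> elt (dk I c p) (Fin t) -> elt (dk I c r) (Fin t) ->
  elt (dk I c q) (Fin t).
Proof.
  intros Hc Hp Hq Hr H1 H2 Ha Hb.
  apply (dk_lt_ultra c p q t); auto.
  eapply ele_elt_trans; [apply (dk_mono p q r); auto|].
  apply (dk_lt_ultra p c r t); auto. rewrite dk_sym; auto.
Qed.
End DK.
Lemma up_nat y : 0 <= y -> exists j : nat, INR j - 1 <= y < INR j.
Proof.
  intros Hy. destruct (archimed y) as [H1 H2].
  assert (Hz : (0 < up y)%Z). { apply lt_IZR. lra. }
  exists (Z.to_nat (up y)).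
  rewrite INR_IZR_INZ, Z2Nat.id by lia. lra.
Qed.

Lemma nat_above y : exists n : nat, y < INR n.
Proof.
  destruct (Rle_dec 0 y) as [H|H].
  - destruct (up_nat y H) as [j Hj]. exists j; lra.
  - exists 0%nat. simpl. lra.
Qed.

Definition frac (p k : nat) : R := INR p / INR (S k).

Lemma frac_dense x y : 0 <= x < y -> exists p k, x < frac p k < y.
Proof.
  intros [Hx Hxy].
  destruct (nat_above (1 / (y - x))) as [k Hk].
  assert (Hk1 : 0 < INR (S k)) by (apply lt_0_INR; lia).
  assert (HkS : INR (S k) = INR k + 1) by (rewrite S_INR; auto).
  assert (Hd : 1 < (y - x) * INR (S k)).
  { assert (1 / (y - x) * (y - x) = 1) by (field; lra).
    assert (1/(y-x) < INR (S k)) by lra.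
    assert (0 < y - x) by lra.
    nra. }
  destruct (up_nat (x * INR (S k))) as [j Hj].
  { apply Rmult_le_pos; lra. }
  exists j, k. unfold frac. split.
  - apply (Rmult_lt_reg_r (INR (S k))); auto. unfold Rdiv. rewrite Rmult_assoc, Rinv_l by lra. lra.
  - apply (Rmult_lt_reg_r (INR (S k))); auto. unfold Rdiv. rewrite Rmult_assoc, Rinv_l by lra. nra.
Qed.

Lemma frac_nonneg p k : 0 <= frac p k.
Proof. unfold frac, Rdiv. apply Rmult_le_pos. apply pos_INR. left; apply Rinv_0_lt_compat, lt_0_INR; lia. Qed.

Lemma borel_empty : borel (fun _ => False).
Proof. eapply borel_ext; [|apply (borel_interval 1 0)]. intros x; split; [lra|tauto]. Qed.

Lemma borel_union2 A B : borel A -> borel B -> borel (fun x => A x \/ B x).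
Proof.
  intros HA HB.
  eapply borel_ext; [|apply (borel_union (fun n => match n with O => A | S _ => B end))].
  - intros x; split.
    + intros [n Hn]. destruct n; auto.
    + intros [H|H]. exists O; auto. exists 1%nat; auto.
  - intros [|n]; auto.
Qed.

Lemma borel_inter2 A B : borel A -> borel B -> borel (fun x => A x /\ B x).
Proof.
  intros HA HB.
  eapply borel_ext; [|apply borel_compl, borel_union2; [apply borel_compl, HA|apply borel_compl, HB]].
  intros x; simpl. split.
  - intros H. apply not_or_and in H. destruct H as [H1 H2]. apply NNPP in H1; apply NNPP in H2; auto.
  - intros [H1 H2] [H|H]; auto.
Qed.

Lemma borel_prop_and (P : Prop) A : borel A -> borel (fun x => P /\ A x).
Proof.
  intros HA. destruct (classic P) as [H|H].
  - eapply borel_ext; [|exact HA]. simpl; tauto.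
  - eapply borel_ext; [|exact borel_empty]. simpl; tauto.
Qed.

Lemma borel_singleton l : borel (fun x => x = l).
Proof.
  eapply borel_ext; [|apply borel_compl, borel_union2;
    [apply (borel_union (fun n x => l - INR n - 1 < x < l))
    |apply (borel_union (fun n x => l < x < l + INR n + 1))]; intros; apply borel_interval].
  intros x; simpl. split.
  - intros H. destruct (Rtotal_order x l) as [Hl|[Hl|Hl]]; auto; exfalso; apply H.
    + left. destruct (nat_above (l - x)) as [n Hn]. exists n. lra.
    + right. destruct (nat_above (x - l)) as [n Hn]. exists n. lra.
  - intros -> [[n Hn]|[n Hn]]; lra.
Qed.

Lemma borel_convex (C : R -> Prop) :
  (forall x, C x -> 0 <= x <= 1) -> (forall a b x, C a -> C b -> a <= x <= b -> C x) -> borel C.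
Proof.
  intros Hb Hc.
  destruct (classic (exists x, C x)) as [Hne|Hne].
  2:{ eapply borel_ext; [|exact borel_empty]. intros x; split; [tauto|]. intros H; apply Hne; eauto. }
  assert (Hbd : bound C). { exists 1. intros x Hx; apply Hb; auto. }
  destruct (completeness C Hbd Hne) as [u [Hu1 Hu2]].
  set (E := fun y => C (- y)).
  assert (HbE : bound E). { exists 0. intros x Hx. specialize (Hb _ Hx). lra. }
  assert (HneE : exists x, E x). { destruct Hne as [x Hx]. exists (-x). unfold E. rewrite Ropp_involutive; auto. }
  destruct (completeness E HbE HneE) as [m [Hm1 Hm2]].
  set (l := - m).
  assert (Hl1 : forall x, C x -> l <= x).
  { intros x Hx. assert (E (-x)) by (unfold E; rewrite Ropp_involutive; auto). specialize (Hm1 _ H). unfold l; lra. }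
  assert (Hl2 : forall b, (forall x, C x -> b <= x) -> b <= l).
  { intros b Hbb. assert (m <= - b). { apply Hm2. intros y Hy. specialize (Hbb _ Hy). lra. } unfold l; lra. }
  eapply borel_ext with (A := fun x => (l < x < u \/ (C l /\ x = l)) \/ (C u /\ x = u)).
  2:{ apply borel_union2; [apply borel_union2|]; try apply borel_interval; apply borel_prop_and; apply borel_singleton. }
  intros x; split.
  - intros [[H|[H ->]]|[H ->]]; auto.
    assert (Ha : exists a, C a /\ a < x).
    { apply NNPP; intros Hn. assert (x <= l). { apply Hl2. intros y Hy. apply Rnot_lt_le. intros Hc'. apply Hn; eauto. } lra. }
    assert (Hb' : exists b, C b /\ x < b).
    { apply NNPP; intros Hn. assert (u <= x). { apply Hu2. intros y Hy. apply Rnot_lt_le. intros Hc'. apply Hn; eauto. } lra. }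
    destruct Ha as [a [Ha1 Ha2]], Hb' as [b [Hb1 Hb2]]. apply (Hc a b); auto; lra.
  - intros Hx. pose proof (Hl1 _ Hx). pose proof (Hu1 _ Hx).
    destruct (Req_dec x l) as [->|]; [left; right; auto|].
    destruct (Req_dec x u) as [->|]; [right; auto|]. left; left; lra.
Qed.

Lemma borel_open (O : R -> Prop) : Defs.open_set O -> (forall x, O x -> 0 < x) -> borel O.
Proof.
  intros HO Hpos.
  set (Ujk := fun (j k : nat) x =>
     (forall y, (INR j - 2) / INR (S k) < y < INR j / INR (S k) -> O y) /\
     ((INR j - 2) / INR (S k) < x < INR j / INR (S k))).
  eapply borel_ext with (A := fun x => exists j, exists k, Ujk j k x).
  2:{ apply borel_union. intros j. apply borel_union. intros k. unfold Ujk.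
      apply borel_prop_and. apply borel_interval. }
  intros x; split.
  - intros [j [k [H1 H2]]]. apply H1; auto.
  - intros Hx. destruct (HO x Hx) as [eps [Heps Hball]].
    destruct (nat_above (2 / eps)) as [k Hk].
    assert (Hk1 : 0 < INR (S k)) by (apply lt_0_INR; lia).
    assert (HkS : INR (S k) = INR k + 1) by (rewrite S_INR; auto).
    assert (Hpx := Hpos x Hx).
    destruct (up_nat (x * INR (S k))) as [j Hj]. { nra. }
    assert (Hw : 2 / INR (S k) < eps).
    { apply (Rmult_lt_reg_r (INR (S k))); auto. unfold Rdiv. rewrite Rmult_assoc, Rinv_l by lra.
      assert (2 / eps * eps = 2) by (field; lra). unfold Rdiv in H. nra. }
    assert (E1 : INR j / INR (S k) = INR j * / INR (S k)) by reflexivity.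
    assert (Hinv : INR (S k) * / INR (S k) = 1) by (field; lra).
    assert (Hx1 : (INR j - 2) / INR (S k) < x).
    { apply (Rmult_lt_reg_r (INR (S k))); auto. unfold Rdiv. rewrite Rmult_assoc, Rinv_l by lra. lra. }
    assert (Hx2 : x < INR j / INR (S k)).
    { apply (Rmult_lt_reg_r (INR (S k))); auto. unfold Rdiv. rewrite Rmult_assoc, Rinv_l by lra. lra. }
    assert (Hwd : INR j / INR (S k) - (INR j - 2) / INR (S k) = 2 / INR (S k)) by (field; lra).
    exists j, k. split; [|lra].
    intros y Hy. apply Hball. apply Rabs_def1; lra.
Qed.
Lemma comp_bounds (O : R -> Prop) a b : (forall x, O x -> 0 < x < 1) ->
  is_component O a b -> 0 <= a /\ b <= 1.
Proof.
  intros Hin [Hab [Hc [Ha Hb]]]. split.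
  - apply Rnot_lt_le. intros Hlt.
    destruct (Rle_dec b 0).
    + specialize (Hin _ (Hc ((a+b)/2) ltac:(lra))). lra.
    + specialize (Hin _ (Hc 0 ltac:(lra))). lra.
  - apply Rnot_lt_le. intros Hlt.
    destruct (Rlt_dec a 1).
    + specialize (Hin _ (Hc 1 ltac:(lra))). lra.
    + specialize (Hin _ (Hc ((a+b)/2) ltac:(lra))). lra.
Qed.

Lemma comp_exists (O : R -> Prop) x : Defs.open_set O -> (forall x, O x -> 0 < x < 1) -> O x ->
  exists a b, is_component O a b /\ a < x < b.
Proof.
  intros HO Hin Hx.
  destruct (HO x Hx) as [eps [Heps Hball]].
  set (Sa := fun u => u <= x /\ forall v, u <= v <= x -> O v).
  set (E := fun y => Sa (- y)).
  assert (HbE : bound E). { exists 0. intros y [Hy1 Hy2]. specialize (Hin _ (Hy2 (-y) ltac:(lra))). lra. }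
  assert (HxS : Sa (x - eps/2)).
  { split; [lra|]. intros v Hv. apply Hball. apply Rabs_def1; lra. }
  assert (HneE : exists y, E y). { exists (-(x - eps/2)). unfold E. rewrite Ropp_involutive; auto. }
  destruct (completeness E HbE HneE) as [m [Hm1 Hm2]].
  set (a := - m).
  assert (Ha1 : forall u, Sa u -> a <= u).
  { intros u Hu. assert (E (-u)) by (unfold E; rewrite Ropp_involutive; auto). specialize (Hm1 _ H). unfold a; lra. }
  assert (Ha2 : forall b, (forall u, Sa u -> b <= u) -> b <= a).
  { intros b Hbb. assert (m <= - b). { apply Hm2. intros y Hy. specialize (Hbb _ Hy). lra. } unfold a; lra. }
  assert (Hax : a < x). { specialize (Ha1 _ HxS). lra. }
  assert (Hain : forall v, a < v <= x -> O v).
  { intros v Hv. assert (exists u, Sa u /\ u < v).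
    { apply NNPP; intros Hn. assert (v <= a). { apply Ha2. intros u Hu. apply Rnot_lt_le. intros Hc. apply Hn; eauto. } lra. }
    destruct H as [u [[Hu1 Hu2] Hu3]]. apply Hu2. lra. }
  assert (Hna : ~ O a).
  { intros Hoa. destruct (HO a Hoa) as [e [He Hb]].
    assert (Sa (a - e/2)).
    { split; [lra|]. intros v Hv. destruct (Rle_dec v a).
      - apply Hb. apply Rabs_def1; lra.
      - apply Hain; lra. }
    specialize (Ha1 _ H). lra. }
  set (Sb := fun u => x <= u /\ forall v, x <= v <= u -> O v).
  assert (HbS : bound Sb). { exists 1. intros y [Hy1 Hy2]. specialize (Hin _ (Hy2 y ltac:(lra))). lra. }
  assert (HxS' : Sb (x + eps/2)).
  { split; [lra|]. intros v Hv. apply Hball. apply Rabs_def1; lra. }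
  destruct (completeness Sb HbS (ex_intro _ _ HxS')) as [b [Hb1 Hb2]].
  assert (Hxb : x < b). { specialize (Hb1 _ HxS'). lra. }
  assert (Hbin : forall v, x <= v < b -> O v).
  { intros v Hv. assert (exists u, Sb u /\ v < u).
    { apply NNPP; intros Hn. assert (b <= v). { apply Hb2. intros u Hu. apply Rnot_lt_le. intros Hc. apply Hn; eauto. } lra. }
    destruct H as [u [[Hu1 Hu2] Hu3]]. apply Hu2. lra. }
  assert (Hnb : ~ O b).
  { intros Hob. destruct (HO b Hob) as [e [He Hbb]].
    assert (Sb (b + e/2)).
    { split; [lra|]. intros v Hv. destruct (Rle_dec b v).
      - apply Hbb. apply Rabs_def1; lra.
      - apply Hbin; lra. }
    specialize (Hb1 _ H). lra. }
  exists a, b. split; [|lra].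
  split; [lra|]. split; [|tauto].
  intros v Hv. destruct (Rle_dec v x). apply Hain; lra. apply Hbin; lra.
Qed.

Lemma kle_real x y : kle (x,0) (y,0) <-> x <= y.
Proof. unfold kle; simpl; split; intros; lra. Qed.

Lemma valid0 x : valid (x,0).
Proof. right; left; reflexivity. Qed.

Lemma Sset_real x y r : Sset (x,0) (y,0) r <-> Rmin x y <= r <= Rmax x y.
Proof.
  unfold Sset. rewrite !kle_real.
  unfold Rmin, Rmax; destruct (Rle_dec x y); split; intros; lra.
Qed.

Lemma zero_dist I x y : (forall r, Rmin x y <= r <= Rmax x y -> I 0 r) ->
  ele (dk I (x,0) (y,0)) (Fin 0).
Proof.
  intros H. apply dk_le; try apply valid0. simpl; lra.
  intros r Hr. apply fI_zero. apply H. apply Sset_real; auto.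
Qed.

Lemma ball_scrI I c t : valid c -> Defs.open_set (I 0) -> (forall x, I 0 x -> 0 < x < 1) ->
  in_scrI I (fun r => 0 <= r <= 1 /\ elt (dk I c (r,0)) (Fin t)).
Proof.
  intros Hc HO Hin.
  set (B := fun r => 0 <= r <= 1 /\ elt (dk I c (r,0)) (Fin t)).
  assert (Hconv : forall a b x, B a -> B b -> a <= x <= b -> B x).
  { intros a b x [Ha1 Ha2] [Hb1 Hb2] Hx. split; [lra|].
    apply (dk_convex I c (a,0) (x,0) (b,0)); auto using valid0; apply kle_real; lra. }
  assert (Htr : forall a b x y, is_component (I 0) a b -> a < x < b -> a < y < b -> B x -> B y).
  { intros a b x y Hcomp Hx Hy [HBx1 HBx2].
    destruct (comp_bounds _ a b Hin Hcomp) as [Ha0 Hb1].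
    split; [lra|].
    apply (dk_lt_ultra I c (x,0) (y,0) t); auto using valid0.
    eapply ele_elt_trans; [apply zero_dist|].
    - intros r Hr. destruct Hcomp as [_ [Hc' _]]. apply Hc'.
      unfold Rmin, Rmax in Hr. destruct (Rle_dec x y); lra.
    - pose proof (dk_nonneg I c (x,0) Hc (valid0 x)).
      pose proof (ele_elt_trans _ _ _ H HBx2). simpl in *. auto. }
  exists (fun r => B r /\ ~ I 0 r), (fun a b => is_component (I 0) a b /\ B ((a+b)/2)).
  split; [|split; [|split]].
  - apply borel_inter2.
    + apply borel_convex; [intros x [Hx _]; auto|exact Hconv].
    + apply borel_compl. apply borel_open; auto. intros x Hx; apply Hin; auto.
  - intros x [[Hx _] Hn]. auto.
  - intros a b [H _]; auto.
  - intros x; split.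
    + intros HB. destruct (classic (I 0 x)) as [Hi|Hi]; [right|left; auto].
      destruct (comp_exists (I 0) x HO Hin Hi) as [a [b [Hcomp Hx]]].
      exists a, b. split; auto. split; auto. apply (Htr a b x ((a+b)/2) Hcomp); [lra|destruct Hcomp; lra|auto].
    + intros [[HB _]|[a [b [[Hcomp HBm] Hx]]]]; auto.
      apply (Htr a b ((a+b)/2) x Hcomp); [destruct Hcomp; lra|lra|auto].
Qed.
From Stdlib Require Import Cantor.

Definition fr (a : nat * nat) : R := frac (fst a) (snd a).
Definition wT := ((nat * nat) * (nat * nat))%type.

Definition Pright I z (w : wT) : Prop :=
  z < fr (snd w) /\ elt (Fin (fr (fst w))) (fI I z) /\
  forall r, z < r <= fr (snd w) -> ele (fI I r) (Fin (fr (fst w))).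
Definition Pleft I z (w : wT) : Prop :=
  fr (snd w) < z /\ elt (Fin (fr (fst w))) (fI I z) /\
  forall r, fr (snd w) <= r < z -> ele (fI I r) (Fin (fr (fst w))).
Definition Pc I (c : R * bool) (w : wT) : Prop :=
  if snd c then Pright I (fst c) w else Pleft I (fst c) w.
Definition Gok I (c : R * bool) : Prop := 0 <= fst c <= 1 /\ exists w, Pc I c w.
Definition FF I := {c : R * bool | Gok I c}.

Definition wit I (u : FF I) : wT :=
  proj1_sig (constructive_indefinite_description _ (proj2 (proj2_sig u))).
Lemma wit_spec I (u : FF I) : Pc I (proj1_sig u) (wit I u).
Proof. unfold wit. destruct (constructive_indefinite_description _ _); simpl; auto. Qed.

Definition enc I (u : FF I) : nat :=
  to_nat (if snd (proj1_sig u) then 1%nat else 0%nat,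
          to_nat (to_nat (fst (wit I u)), to_nat (snd (wit I u)))).

Lemma to_nat_inj p q : to_nat p = to_nat q -> p = q.
Proof. intros H. rewrite <- (cancel_of_to p), <- (cancel_of_to q), H. reflexivity. Qed.

Lemma elt_irrefl a : ~ elt a a.
Proof. destruct a; simpl; auto; lra. Qed.

Lemma Pc_unique I z1 z2 b w : Pc I (z1,b) w -> Pc I (z2,b) w -> z1 = z2.
Proof.
  unfold Pc; simpl. destruct b.
  - intros [H1 [H2 H3]] [G1 [G2 G3]].
    destruct (Rtotal_order z1 z2) as [Hl|[He|Hl]]; auto; exfalso.
    + specialize (H3 z2 ltac:(lra)). pose proof (ele_elt_trans _ _ _ H3 G2). exact (elt_irrefl _ H).
    + specialize (G3 z1 ltac:(lra)). pose proof (ele_elt_trans _ _ _ G3 H2). exact (elt_irrefl _ H).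
  - intros [H1 [H2 H3]] [G1 [G2 G3]].
    destruct (Rtotal_order z1 z2) as [Hl|[He|Hl]]; auto; exfalso.
    + specialize (G3 z1 ltac:(lra)). pose proof (ele_elt_trans _ _ _ G3 H2). exact (elt_irrefl _ H).
    + specialize (H3 z2 ltac:(lra)). pose proof (ele_elt_trans _ _ _ H3 G2). exact (elt_irrefl _ H).
Qed.

Lemma enc_inj I (u v : FF I) : enc I u = enc I v -> u = v.
Proof.
  unfold enc. intros H. apply to_nat_inj in H.
  pose proof (f_equal fst H) as Hb. pose proof (f_equal snd H) as Hw. cbn [fst snd] in Hb, Hw.
  apply to_nat_inj in Hw.
  pose proof (f_equal fst Hw) as Hw1. pose proof (f_equal snd Hw) as Hw2. cbn [fst snd] in Hw1, Hw2.
  apply to_nat_inj in Hw1. apply to_nat_inj in Hw2.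
  assert (Hw0 : wit I u = wit I v) by (destruct (wit I u), (wit I v); simpl in *; subst; auto).
  pose proof (wit_spec I u) as Su. pose proof (wit_spec I v) as Sv.
  destruct u as [[zu bu] hu], v as [[zv bv] hv]; simpl in *.
  assert (bu = bv) by (destruct bu, bv; auto; discriminate). subst bv.
  rewrite Hw0 in Su.
  assert (zu = zv) by (eapply Pc_unique; eauto). subst zv.
  f_equal. apply proof_irrelevance.
Qed.

Definition pos I (x : U (FF I)) : key :=
  match x with
  | inl a => (proj1_sig a, 0)
  | inr u => (fst (proj1_sig u), if snd (proj1_sig u) then 1 else -1)
  end.

Lemma pos_valid I x : valid (pos I x).
Proof. destruct x as [a|[[z b] h]]; simpl. apply valid0. destruct b; unfold valid; simpl; auto. Qed.

Lemma pos_range I x : 0 <= fst (pos I x) <= 1.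
Proof. destruct x as [[a ha]|[[z b] h]]; simpl; auto. destruct h; auto. Qed.

Definition dbar I (x y : U (FF I)) : ereal := dk I (pos I x) (pos I y).

Lemma valid1 z : valid (z,1).
Proof. unfold valid; simpl; auto. Qed.
Lemma validm1 z : valid (z,-1).
Proof. unfold valid; simpl; auto. Qed.

Lemma kle_z1 z k : valid k -> ~ kle k (z,0) -> kle (z,1) k.
Proof. destruct k as [a i]; unfold valid, kle; simpl. intros Hv Hn. lra. Qed.
Lemma kle_zm1 z k : valid k -> ~ kle (z,0) k -> kle k (z,-1).
Proof. destruct k as [a i]; unfold valid, kle; simpl. intros Hv Hn. lra. Qed.
Lemma fst_gt z k : valid k -> kle (z,1) k -> k <> (z,1) -> z < fst k.
Proof. destruct k as [a i]; unfold valid, kle; simpl. intros Hv H Hne.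
  destruct H as [H|[H1 H2]]; auto. exfalso. apply Hne. subst. f_equal. lra. Qed.
Lemma fst_lt z k : valid k -> kle k (z,-1) -> k <> (z,-1) -> fst k < z.
Proof. destruct k as [a i]; unfold valid, kle; simpl. intros Hv H Hne.
  destruct H as [H|[H1 H2]]; auto. exfalso. apply Hne. subst. f_equal. lra. Qed.
Lemma mu_pos_mono {F : Type} (S1 S2 : U F -> Prop) : (forall z, S1 z -> S2 z) -> mu_pos S1 -> mu_pos S2.
Proof.
  unfold mu_pos, lebesgue_null. intros H H1 H2. apply H1. intros eps Heps.
  destruct (H2 eps Heps) as [a [b [h1 [h2 h3]]]]. exists a, b. split; auto. split; auto.
  intros x [h Hx]. apply h2. exists h. apply H; auto.
Qed.

Lemma Sset_z1z0 z r : Sset (z,1) (z,0) r -> r = z.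
Proof. unfold Sset, kle; simpl. intros [[H1 H2]|[H1 H2]]; destruct H1; destruct H2; lra. Qed.
Lemma Sset_zm1z0 z r : Sset (z,-1) (z,0) r -> r = z.
Proof. unfold Sset, kle; simpl. intros [[H1 H2]|[H1 H2]]; destruct H1; destruct H2; lra. Qed.

Section Comp.
Variable I : R -> R -> Prop.
Variable k : nat -> key.
Hypothesis hv : forall n, valid (k n).

Definition Ek t c := exists N, forall n, (N <= n)%nat -> elt (dk I (k n) c) (Fin t).

Lemma Ek_mono t t' c : t <= t' -> Ek t c -> Ek t' c.
Proof. intros H [N HN]. exists N. intros n Hn. eapply elt_ele_trans; [apply HN; auto|]. simpl; auto. Qed.

Lemma Ek_close t c c' : valid c -> valid c' -> Ek t c -> elt (dk I c c') (Fin t) -> Ek t c'.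
Proof. intros Hc Hc' [N HN] H. exists N. intros n Hn. apply (dk_lt_ultra I (k n) c c' t); auto. Qed.

Lemma Ek_dist t c c' : valid c -> valid c' -> Ek t c -> Ek t c' -> elt (dk I c c') (Fin t).
Proof.
  intros Hc Hc' [N HN] [M HM]. apply (dk_lt_ultra I c (k (max N M)) c' t); auto.
  rewrite dk_sym. apply HN; lia. apply HM; lia.
Qed.

Lemma Ek_conv t c1 c c2 : valid c1 -> valid c -> valid c2 -> kle c1 c -> kle c c2 ->
  Ek t c1 -> Ek t c2 -> Ek t c.
Proof.
  intros H1 H H2 K1 K2 E1 E2. apply (Ek_close t c1 c); auto.
  eapply ele_elt_trans; [apply (dk_mono I c1 c c2); auto|]. apply Ek_dist; auto.
Qed.

Lemma Ek_k s t : (forall t, s < t -> exists N, forall m n, (N <= m)%nat -> (N <= n)%nat -> elt (dk I (k m) (k n)) (Fin t)) ->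
  s < t -> exists N, forall n, (N <= n)%nat -> Ek t (k n).
Proof. intros HC Ht. destruct (HC t Ht) as [N HN]. exists N. intros n Hn. exists N. intros m Hm. auto. Qed.
End Comp.

Section Limit.
Variable I : R -> R -> Prop.
Variable yn : nat -> U (FF I).
Let k := fun n => pos I (yn n).
Variable s : R.
Hypothesis hs : 0 <= s.
Hypothesis HC : forall t, s < t -> exists N, forall m n, (N <= m)%nat -> (N <= n)%nat -> elt (dk I (k m) (k n)) (Fin t).

Lemma hv : forall n, valid (k n).
Proof. intros; apply pos_valid. Qed.

Lemma find_limit : exists y : U (FF I), forall t, s < t -> Ek I k t (pos I y).
Proof.
  pose proof hv as hv.
  assert (Hne : forall t, s < t -> exists y, Ek I k t (pos I y)).
  { intros t Ht. destruct (Ek_k I k s t HC Ht) as [N HN]. exists (yn N). apply HN; lia. }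
  set (Low := fun r => exists t, s < t /\ forall y : U (FF I), Ek I k t (pos I y) -> r <= fst (pos I y)).
  assert (Low0 : Low 0). { exists (s+1). split; [lra|]. intros y _. apply pos_range. }
  assert (Lowb : bound Low).
  { exists 1. intros r [t [Ht H]]. destruct (Hne t Ht) as [y Hy]. specialize (H y Hy).
    pose proof (pos_range I y). lra. }
  destruct (completeness Low Lowb (ex_intro _ _ Low0)) as [L [HL1 HL2]].
  assert (HLgt : forall r, L < r -> forall t, s < t -> exists y, Ek I k t (pos I y) /\ fst (pos I y) < r).
  { intros r Hr t Ht. apply NNPP. intros Hn.
    assert (Low r). { exists t. split; auto. intros y Hy. apply Rnot_lt_le. intros Hc. apply Hn. eauto. }
    specialize (HL1 _ H). lra. }
  assert (HLlt : forall r, r < L -> forall t, s < t -> exists y, Ek I k t (pos I y) /\ r < fst (pos I y)).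
  { intros r Hr t Ht.
    assert (exists r', Low r' /\ r < r').
    { apply NNPP. intros Hn. assert (L <= r). { apply HL2. intros x Hx. apply Rnot_lt_le. intros Hc. apply Hn; eauto. } lra. }
    destruct H as [r' [[t1 [Ht1 H1]] Hr']].
    destruct (Hne (Rmin t t1)) as [y Hy]. { apply Rmin_glb_lt; auto. }
    exists y. split. eapply Ek_mono; [|exact Hy]. apply Rmin_l.
    specialize (H1 y (Ek_mono I k _ _ _ (Rmin_r t t1) Hy)). lra. }
  assert (HL0 : 0 <= L) by (apply HL1; auto).
  assert (HL1' : L <= 1). { apply HL2. intros r [t [Ht H]]. destruct (Hne t Ht) as [y Hy]. specialize (H y Hy). pose proof (pos_range I y). lra. }
  destruct (classic (forall t, s < t -> Ek I k t (L,0))) as [Hall|Hnot].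
  { exists (inl (exist _ L (conj HL0 HL1'))). simpl. auto. }
  apply not_all_ex_not in Hnot. destruct Hnot as [t0 Hnot].
  apply imply_to_and in Hnot. destruct Hnot as [Ht0 Hnot].
  destruct (Ek_k I k s t0 HC Ht0) as [N0 HN0].
  assert (E0 := HN0 N0 (le_n _)).
  destruct (classic (kle (k N0) (L,0))) as [Hleft|Hright].
  -
    assert (Hside : forall t y, t <= t0 -> Ek I k t (pos I y) -> ~ kle (L,0) (pos I y)).
    { intros t y Htt Hy Hc. apply Hnot. apply (Ek_conv I k hv t0 (k N0) (L,0) (pos I y)); auto using valid0, pos_valid.
      eapply Ek_mono; eauto. }
    assert (R1 : forall t'' w, s < t'' -> t'' <= t0 -> Ek I k t'' (pos I w) -> ele (dk I (pos I w) (L,-1)) (Fin t'')).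
    { intros t'' w Hs1 Hs2 Hw.
      assert (Hkw := kle_zm1 L (pos I w) (pos_valid I w) (Hside _ _ Hs2 Hw)).
      apply dk_le; auto using pos_valid, validm1. simpl; lra.
      intros r Hr. destruct Hr as [[Hr1 Hr2]|[Hr1 Hr2]].
      2:{ exfalso. assert ((r,0) = (L,-1)) by (apply kle_antisym; eauto using kle_trans).
          injection H; lra. }
      assert (HrL : r < L) by (unfold kle in Hr2; simpl in Hr2; lra).
      destruct (HLlt r HrL t'' Hs1) as [y1 [Hy1 Hy1r]].
      assert (Hd := Ek_dist I k hv t'' _ _ (pos_valid I w) (pos_valid I y1) Hw Hy1).
      assert (Hne' : pos I w <> pos I y1).
      { intros He. rewrite <- He in Hy1r. unfold kle in Hr1; simpl in Hr1. lra. }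
      assert (Hub : ele (fI I r) (dk I (pos I w) (pos I y1))).
      { apply dk_ub; auto. left. split; auto. left. simpl. lra. }
      apply elt_ele. eapply ele_elt_trans; eauto. }
    assert (R2 : forall t, s < t -> Ek I k t (L,-1)).
    { intros t Ht. set (t'' := (s + Rmin t t0)/2).
      assert (Hmin1 := Rmin_l t t0). assert (Hmin2 := Rmin_r t t0).
      assert (Hmin3 : s < Rmin t t0) by (apply Rmin_glb_lt; auto).
      destruct (Hne t'' ltac:(unfold t''; lra)) as [w Hw].
      assert (H1 := R1 t'' w ltac:(unfold t''; lra) ltac:(unfold t''; lra) Hw).
      apply (Ek_close I k hv t (pos I w)); auto using pos_valid, validm1.
      eapply Ek_mono; [|exact Hw]. unfold t''; lra.
      eapply ele_elt_trans; [exact H1|]. simpl. unfold t''; lra. }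
    destruct (classic (exists n, k n = (L,-1))) as [[n Hn]|Hnone].
    { exists (yn n). intros t Ht. change (pos I (yn n)) with (k n). rewrite Hn. apply R2; auto. }
    assert (HfI : ~ elt (fI I L) (Fin t0)).
    { intros Hlt. apply Hnot. apply (Ek_close I k hv t0 (L,-1)); auto using validm1, valid0.
      eapply ele_elt_trans; [|exact Hlt].
      apply dk_le; auto using validm1, valid0. apply fI_nonneg.
      intros r Hr. rewrite (Sset_zm1z0 L r Hr). apply ele_refl. }
    set (t1 := (s + t0)/2).
    destruct (frac_dense t1 t0) as [pa [ka Ha]]. { unfold t1; lra. }
    destruct (Ek_k I k s t1 HC ltac:(unfold t1; lra)) as [N1 HN1].
    assert (E1 := HN1 N1 (le_n _)).
    assert (Hk1 := kle_zm1 L (k N1) (hv N1) (Hside t1 (yn N1) ltac:(unfold t1; lra) E1)).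
    assert (Hf1 := fst_lt L (k N1) (hv N1) Hk1 (fun e => Hnone (ex_intro _ N1 e))).
    assert (Hf0 := pos_range I (yn N1)).
    destruct (frac_dense (fst (k N1)) L) as [pq [kq Hq]]. { unfold k in *; lra. }
    assert (Pw : Pleft I L ((pa,ka),(pq,kq))).
    { unfold Pleft, fr; cbn [fst snd]. split; [lra|]. split.
      - eapply elt_ele_trans; [|apply not_elt; exact HfI]. simpl. lra.
      - intros r Hr.
        assert (Hub : ele (fI I r) (dk I (k N1) (L,-1))).
        { apply dk_ub. intro He; apply Hnone; eauto. left. split; left; simpl; lra. }
        eapply ele_trans; [exact Hub|]. eapply ele_trans.
        apply (R1 t1 (yn N1)); auto; unfold t1; lra. simpl; lra. }
    exists (inr (exist _ (L,false) (conj (conj HL0 HL1') (ex_intro _ _ Pw)))).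
    intros t Ht. simpl. apply R2; auto.
  -
    apply not_kle in Hright. destruct Hright as [Hright _].
    assert (Hside : forall t y, t <= t0 -> Ek I k t (pos I y) -> ~ kle (pos I y) (L,0)).
    { intros t y Htt Hy Hc. apply Hnot. apply (Ek_conv I k hv t0 (pos I y) (L,0) (k N0)); auto using valid0, pos_valid.
      eapply Ek_mono; eauto. }
    assert (R1 : forall t'' w, s < t'' -> t'' <= t0 -> Ek I k t'' (pos I w) -> ele (dk I (L,1) (pos I w)) (Fin t'')).
    { intros t'' w Hs1 Hs2 Hw.
      assert (Hkw := kle_z1 L (pos I w) (pos_valid I w) (Hside _ _ Hs2 Hw)).
      apply dk_le; auto using pos_valid, valid1. simpl; lra.
      intros r Hr. destruct Hr as [[Hr1 Hr2]|[Hr1 Hr2]].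
      2:{ exfalso. assert ((r,0) = (L,1)) by (apply kle_antisym; eauto using kle_trans).
          injection H; lra. }
      assert (HrL : L < r) by (unfold kle in Hr1; simpl in Hr1; lra).
      destruct (HLgt r HrL t'' Hs1) as [y1 [Hy1 Hy1r]].
      assert (Hd := Ek_dist I k hv t'' _ _ (pos_valid I y1) (pos_valid I w) Hy1 Hw).
      assert (Hne' : pos I y1 <> pos I w).
      { intros He. rewrite He in Hy1r. unfold kle in Hr2; simpl in Hr2. lra. }
      assert (Hub : ele (fI I r) (dk I (pos I y1) (pos I w))).
      { apply dk_ub; auto. left. split; auto. left. simpl. lra. }
      apply elt_ele. eapply ele_elt_trans; eauto. }
    assert (R2 : forall t, s < t -> Ek I k t (L,1)).
    { intros t Ht. set (t'' := (s + Rmin t t0)/2).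
      assert (Hmin1 := Rmin_l t t0). assert (Hmin2 := Rmin_r t t0).
      assert (Hmin3 : s < Rmin t t0) by (apply Rmin_glb_lt; auto).
      destruct (Hne t'' ltac:(unfold t''; lra)) as [w Hw].
      assert (H1 := R1 t'' w ltac:(unfold t''; lra) ltac:(unfold t''; lra) Hw).
      apply (Ek_close I k hv t (pos I w)); auto using pos_valid, valid1.
      eapply Ek_mono; [|exact Hw]. unfold t''; lra.
      rewrite dk_sym. eapply ele_elt_trans; [exact H1|]. simpl. unfold t''; lra. }
    destruct (classic (exists n, k n = (L,1))) as [[n Hn]|Hnone].
    { exists (yn n). intros t Ht. change (pos I (yn n)) with (k n). rewrite Hn. apply R2; auto. }
    assert (HfI : ~ elt (fI I L) (Fin t0)).
    { intros Hlt. apply Hnot. apply (Ek_close I k hv t0 (L,1)); auto using valid1, valid0.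
      eapply ele_elt_trans; [|exact Hlt].
      apply dk_le; auto using valid1, valid0. apply fI_nonneg.
      intros r Hr. rewrite (Sset_z1z0 L r Hr). apply ele_refl. }
    set (t1 := (s + t0)/2).
    destruct (frac_dense t1 t0) as [pa [ka Ha]]. { unfold t1; lra. }
    destruct (Ek_k I k s t1 HC ltac:(unfold t1; lra)) as [N1 HN1].
    assert (E1 := HN1 N1 (le_n _)).
    assert (Hk1 := kle_z1 L (k N1) (hv N1) (Hside t1 (yn N1) ltac:(unfold t1; lra) E1)).
    assert (Hf1 := fst_gt L (k N1) (hv N1) Hk1 (fun e => Hnone (ex_intro _ N1 e))).
    destruct (frac_dense L (fst (k N1))) as [pq [kq Hq]]. { lra. }
    assert (Pw : Pright I L ((pa,ka),(pq,kq))).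
    { unfold Pright, fr; cbn [fst snd]. split; [lra|]. split.
      - eapply elt_ele_trans; [|apply not_elt; exact HfI]. simpl. lra.
      - intros r Hr.
        assert (Hub : ele (fI I r) (dk I (L,1) (k N1))).
        { apply dk_ub. intro He; apply Hnone; eauto. left. split; left; simpl; lra. }
        eapply ele_trans; [exact Hub|]. eapply ele_trans.
        apply (R1 t1 (yn N1)); auto; unfold t1; lra. simpl; lra. }
    exists (inr (exist _ (L,true) (conj (conj HL0 HL1') (ex_intro _ _ Pw)))).
    intros t Ht. simpl. apply R2; auto.
Qed.
End Limit.
Lemma in_scrI_ext I (S S' : R -> Prop) : (forall r, S r <-> S' r) -> in_scrI I S -> in_scrI I S'.
Proof.
  intros H [A [M [H1 [H2 [H3 H4]]]]]. exists A, M. split; auto. split; auto. split; auto.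
  intros x. rewrite <- H. auto.
Qed.

Theorem mainTheorem17 (I : R -> R -> Prop) :
  nested_interval_partition I ->
  exists (F : Type) (enc : F -> nat),
    (forall u v, enc u = enc v -> u = v) /\
    exists dbar : U F -> U F -> ereal,
      pseudo_ultrametric dbar /\
      (forall x y : unit01, dbar (inl x) (inl y) = dI I (proj1_sig x) (proj1_sig y)) /\
      (forall (x : U F) (t : R), in_scrI I (trace01 (ball dbar x t))) /\
      backbone_complete dbar.
Proof.
  intros HI. destruct HI as [H0 _].
  destruct (H0 0 (Rle_refl 0)) as [HO Hin].
  exists (FF I), (enc I). split; [apply enc_inj|].
  exists (dbar I). split; [|split; [|split]].
  - split; [|split; [|split]].
    + intros x. unfold dbar. apply dk_self.
    + intros x y. unfold dbar. apply dk_sym.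
    + intros x y. unfold dbar. apply dk_nonneg; apply pos_valid.
    + intros x y z. unfold dbar. apply dk_ultra; apply pos_valid.
  - intros [x hx] [y hy]. unfold dbar, dI, dk. simpl.
    destruct (kdec (x,0) (y,0)) as [He|Hne]; destruct (Req_EM_T x y) as [He'|Hne']; auto.
    + exfalso. injection He; auto.
    + subst. exfalso; auto.
    + f_equal. apply functional_extensionality; intro v. apply propositional_extensionality.
      split; intros [r [Hr ->]]; exists r; split; auto; apply Sset_real; auto.
  - intros x t. apply (in_scrI_ext I (fun r => 0 <= r <= 1 /\ elt (dk I (pos I x) (r,0)) (Fin t))).
    + intros r. unfold trace01, ball, dbar. simpl. split.
      * intros [h H]. exists h. exact H.
      * intros [h H]. split; auto.
    + apply ball_scrI; auto. apply pos_valid.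
  - intros p Hb HC.
    set (s := fun n => snd (p n)). set (yn := fun n => fst (p n)).
    assert (Hcs : Cauchy_crit s).
    { intros eps Heps. destruct (HC (eps/2) ltac:(lra)) as [N HN]. exists N.
      intros n m Hn Hm. specialize (HN m n Hm Hn). unfold dT in HN.
      assert (Hr := ele_elt_trans _ _ _ (emax_r _ _) HN). simpl in Hr.
      unfold R_dist, s. lra. }
    destruct (R_complete s Hcs) as [ss Hss].
    assert (Hs0 : forall n, 0 <= s n). { intros n. destruct (Hb n); auto. }
    assert (hs : 0 <= ss).
    { apply Rnot_lt_le. intros Hlt. destruct (Hss (- ss) ltac:(lra)) as [N HN].
      specialize (HN N (le_n _)). unfold R_dist in HN. specialize (Hs0 N).
      apply Rabs_def2 in HN. lra. }
    assert (HCk : forall t, ss < t -> exists N, forall m n, (N <= m)%nat -> (N <= n)%nat ->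
               elt (dk I ((fun n => pos I (yn n)) m) ((fun n => pos I (yn n)) n)) (Fin t)).
    { intros t Ht. set (e := (t - ss)/3).
      destruct (HC e ltac:(unfold e; lra)) as [N1 HN1].
      destruct (Hss e ltac:(unfold e; lra)) as [N2 HN2].
      exists (max N1 N2). intros m n Hm Hn.
      specialize (HN1 m n ltac:(lia) ltac:(lia)).
      assert (Hm2 := HN2 m ltac:(lia)). assert (Hn2 := HN2 n ltac:(lia)).
      unfold R_dist in Hm2, Hn2. apply Rabs_def2 in Hm2. apply Rabs_def2 in Hn2.
      unfold dT in HN1. assert (Hl := ele_elt_trans _ _ _ (emax_l _ _) HN1).
      unfold dbar in Hl. simpl.
      destruct (dk I (pos I (fst (p m))) (pos I (fst (p n)))) as [d|] eqn:Ed; simpl in Hl; [|tauto].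
      unfold yn. rewrite Ed. simpl. unfold s in *. unfold e in *. lra. }
    destruct (find_limit I yn ss hs HCk) as [y Hy].
    exists (y, ss). split.
    + split; [exact hs|]. simpl. unfold fbb. apply einf_le_of.
      { intros t [Ht _]; auto. }
      intros t Ht. split; [lra|].
      destruct (Hy t Ht) as [N1 HN1].
      destruct (Hss (t - ss) ltac:(lra)) as [N2 HN2].
      set (n := max N1 N2).
      assert (H1 := HN1 n ltac:(unfold n; lia)).
      assert (H2 := HN2 n ltac:(unfold n; lia)). unfold R_dist in H2. apply Rabs_def2 in H2.
      destruct (Hb n) as [_ Hbn].
      assert (Hlt : elt (fbb (dbar I) (fst (p n))) (Fin t)).
      { eapply ele_elt_trans; [exact Hbn|]. simpl. unfold s in H2. lra. }
      destruct (einf_lt _ _ (fun t0 (h : 0 <= t0 /\ _) => proj1 h) Hlt) as [t' [[Ht'0 Hmu] Ht't]].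
      eapply mu_pos_mono; [|exact Hmu].
      intros z Hz. unfold ball, dbar in *.
      apply (dk_lt_ultra I (pos I y) (pos I (fst (p n))) (pos I z) t); try apply pos_valid.
      * rewrite dk_sym. exact H1.
      * eapply elt_ele_trans; [exact Hz|]. simpl; lra.
    + intros eps Heps.
      destruct (Hy (ss + eps/2) ltac:(lra)) as [N1 HN1].
      destruct (Hss (eps/2) ltac:(lra)) as [N2 HN2].
      exists (max N1 N2). intros n Hn.
      assert (H1 := HN1 n ltac:(lia)).
      assert (H2 := HN2 n ltac:(lia)). unfold R_dist in H2. apply Rabs_def2 in H2.
      unfold dT. apply emax_lt.
      * unfold dbar. simpl. unfold yn in H1.
        destruct (dk I (pos I (fst (p n))) (pos I y)) as [d|]; simpl in *; [|tauto].
        unfold s in H2. lra.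
      * simpl. unfold s in H2. rewrite Rabs_minus_sym. 
        assert (Rabs (snd (p n) - ss) < eps/2) by (apply Rabs_def1; lra). lra.
Qed.
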